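(* Consider the setting described in the context and assume $D>2$. For $t\ge 1$ define $\mathcal{I}_0(t)=\bigcup_{m=0}^{t-1}\mathcal{F}_0(m)$, $\mathcal{I}_1(t)=\Big(\bigcup_{m=0}^{t-1}\mathcal{F}_{D-1}(m)\Big)\setminus \mathcal{I}_0(t)$, $\mathcal{I}_2(t)=V\setminus(\mathcal{I}_0(t)\cup\mathcal{I}_1(t))$. Then for every $t\ge1$: $\hat d_i(t)=m$ for all $i\in\mathcal{F}_0(m)$ with $0\le m<t$; $\hat d_i(t)=m$ for all $i\in\mathcal{F}_{D-1}(m)\cap\mathcal{I}_2(t)$; and $\hat d_i(t)\in\{t,t+1\}$ for all $i\in\mathcal{I}_1(t)$.
   Context: $G=(V,E)$ is a finite connected undirected graph with node set $V=\{0,\dots,N-1\}$; $\mathcal{N}(i)$ denotes the set of neighbours of $i$. Every edge has length $1$, $d_{ij}$ is the hop distance between $i$ and $j$, and $\mathcal{F}_k(m)=\{i\in V : d_{ik}=m\}$. The source set is $S(t)=\{D-1\}$ for $t\le 0$ and $S(t)=\{0\}$ for $t\ge 1$. The integer $D$ satisfies $\max_{i\in V}d_{i0}=D-1$, and nodes are labelled so that $0,1,\dots,D-1$ is a path in which node $i$ is a neighbour of $i+1$ with $d_{0,i}=i$ for $0\le i\le D-1$. Distance estimates evolve, for $t\ge1$, by $\hat d_i(t)=0$ if $i\in S(t)$ and $\hat d_i(t)=\min_{j\in\mathcal{N}(i)}\{\hat d_j(t-1)+1\}$ otherwise, with initial values $\hat d_i(0)=m$ for all $i\in\mathcal{F}_{D-1}(m)$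 (the steady state for source $D-1$). *)

(* Defs.v *)
From mathcomp Require Import all_boot all_order.
Set Implicit Arguments. Unset Strict Implicit. Unset Printing Implicit Defensive.

(* Node set V = {0,...,N-1} with N = n.+1, represented by 'I_n.+1. *)
Definition node (n k : nat) : 'I_n.+1 := inord k.

Section GraphDefs.
Variables (T : finType) (e : rel T).

Definition walk_len (k : nat) (i j : T) : bool :=
  [exists p : k.-tuple T, path e i p && (last i p == j)].

(* hop distance d_{ij}: least k with a k-edge walk from i to j
   (for a connected graph this is < #|T|). *)
Definition dist (i j : T) : nat :=
  find (fun k => walk_len k i j) (iota 0 #|T|).

Definition inF (k : T) (m : nat) (i : T) : bool := dist i k == m.

(* Distance estimates: s0 is the source for t >= 1 (node 0),
   s1 the source for t <= 0 (node D-1).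
   dhat 0 i = d_{i,s1}; dhat (t+1) i = 0 if i = s0,
   else min over neighbours j of dhat t j + 1.
   (The default #|T| of the min is only used for nodes without
   neighbours, which do not exist in a connected graph with >= 2 nodes.) *)
Fixpoint dhat (s0 s1 : T) (t : nat) (i : T) : nat :=
  match t with
  | 0 => dist i s1
  | t'.+1 => if i == s0 then 0
             else \big[minn/#|T|]_(j | e i j) (dhat s0 s1 t' j).+1
  end.

Definition I0 (s0 : T) (t : nat) (i : T) : bool := dist i s0 < t.
Definition I1 (s0 s1 : T) (t : nat) (i : T) : bool :=
  (dist i s1 < t) && ~~ I0 s0 t i.
Definition I2 (s0 s1 : T) (t : nat) (i : T) : bool :=
  ~~ I0 s0 t i && ~~ I1 s0 s1 t i.
End GraphDefs.

(* Main.v *)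
Require Import Defs.
From mathcomp Require Import all_boot all_order.
From mathcomp Require Import zify.
Set Implicit Arguments. Unset Strict Implicit.

Section Gen.
Variables (T : finType) (e : rel T).
Hypothesis conn : forall i j : T, connect e i j.

Lemma dist_le_card i j : dist e i j <= #|T|.
Proof. by rewrite /dist -[X in _ <= X](size_iota 0) find_size. Qed.

Lemma walk_exists i j : exists2 k, k < #|T| & walk_len e k i j.
Proof.
have /connectP [p pth ->] := conn i j.
case/shortenP: pth => p' pth' uq _.
exists (size p').
  have := max_card (mem (i :: p')).
  by rewrite (card_uniqP uq).
by apply/existsP; exists (in_tuple p'); rewrite pth' eqxx.
Qed.

Lemma has_walk i j : has (fun k => walk_len e k i j) (iota 0 #|T|).
Proof.
have [k kT w] := walk_exists i j.
by apply/hasP; exists k => //; rewrite mem_iota.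
Qed.

Lemma dist_lt i j : dist e i j < #|T|.
Proof. by rewrite /dist -[X in _ < X](size_iota 0) -has_find has_walk. Qed.

Lemma walk_dist i j : walk_len e (dist e i j) i j.
Proof.
have := nth_find 0 (has_walk i j).
by rewrite nth_iota ?add0n //; have := dist_lt i j.
Qed.

Lemma dist_min k i j : walk_len e k i j -> dist e i j <= k.
Proof.
move=> w; rewrite leqNgt; apply/negP => lt.
have := before_find 0 lt.
have kT : k < #|T| by apply: ltn_trans lt (dist_lt i j).
by rewrite nth_iota ?add0n ?size_iota // w.
Qed.

Lemma walk_cons k i j x : e i j -> walk_len e k j x -> walk_len e k.+1 i x.
Proof.
move=> eij /existsP [p /andP [pp lp]]; apply/existsP; exists [tuple of j :: p].
by rewrite /= eij pp.
Qed.

Lemma walk_uncons k i x : walk_len e k.+1 i x -> exists2 j, e i j & walk_len e k j x.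
Proof.
case/existsP => p; case/tupleP: p => j p /= /andP [/andP [eij pp] lp].
by exists j => //; apply/existsP; exists p; rewrite pp lp.
Qed.

Lemma dist_edge i j x : e i j -> dist e i x <= (dist e j x).+1.
Proof. by move=> eij; apply: dist_min; exact: walk_cons eij (walk_dist j x). Qed.

Lemma dist_down i x k : dist e i x = k.+1 -> exists2 j, e i j & dist e j x = k.
Proof.
move=> d; have := walk_dist i x; rewrite d => /walk_uncons [j eij w].
exists j => //; apply/eqP; rewrite eqn_leq dist_min //=.
by have := @dist_edge i j x eij; rewrite d ltnS.
Qed.

Lemma dist0 i x : (dist e i x == 0) = (i == x).
Proof.
apply/eqP/eqP => [d|->].
  have := walk_dist i x; rewrite d => /existsP [p].
  by rewrite (tuple0 p) /= => /eqP.
apply/eqP; rewrite -leqn0; apply: dist_min.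
by apply/existsP; exists [tuple] => /=.
Qed.

Lemma bigmin_le (P : pred T) (F : T -> nat) x0 j : P j ->
  \big[minn/x0]_(k | P k) F k <= F j.
Proof.
move=> Pj; rewrite -big_filter.
have : j \in [seq k <- index_enum T | P k] by rewrite mem_filter Pj mem_index_enum.
elim: [seq k <- index_enum T | P k] => [|a s IHs] //.
rewrite in_cons big_cons => /orP [/eqP ->|js]; first exact: geq_minl.
by rewrite geq_min IHs ?orbT.
Qed.

Variables (s0 s1 : T).

Lemma dhat_step t i j : e i j -> dhat e s0 s1 t.+1 i <= (dhat e s0 s1 t j).+1.
Proof.
move=> eij /=; case: eqP => // _.
exact: bigmin_le.
Qed.

Definition fb t i :=
  if dist e i s0 < t then dist e i s0 else maxn t (dist e i s1).

Lemma dhat_lb t i : fb t i <= dhat e s0 s1 t i.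
Proof.
elim: t i => [|t IH] i /=.
  by rewrite /fb ltn0 max0n.
case: eqP => [->|ne].
  by rewrite /fb; move: (dist0 s0 s0); rewrite eqxx => /eqP ->.
apply: (big_ind (fun x => fb t.+1 i <= x)).
- rewrite /fb; case: ifP => h; first exact: dist_le_card.
  rewrite geq_max dist_le_card andbT.
  by apply: leq_trans (dist_le_card i s0); rewrite leqNgt h.
- by move=> x y hx hy; rewrite leq_min hx hy.
- move=> j eij; have := IH j.
  have h1 := @dist_edge i j s0 eij; have h2 := @dist_edge i j s1 eij.
  rewrite /fb; case: ifP; case: ifP; lia.
Qed.

Lemma dhat_ub0 k i t : dist e i s0 = k -> k < t -> dhat e s0 s1 t i <= k.
Proof.
elim: k i t => [|k IH] i t.
  move/eqP; rewrite dist0 => /eqP ->; case: t => // t _ /=; by rewrite eqxx.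
move=> /dist_down [j eij dj]; case: t => // t; rewrite ltnS => kt.
apply: leq_trans (dhat_step _ eij) _; rewrite ltnS; exact: IH.
Qed.

Lemma dhat_ub1 t i : t <= dist e i s1 -> dhat e s0 s1 t i <= dist e i s1.
Proof.
elim: t i => [|t IH] i; first by [].
move=> h; case d: (dist e i s1) h => [|b] // h.
have [j eij dj] := dist_down d.
apply: leq_trans (dhat_step _ eij) _; rewrite ltnS -dj; apply: IH; by rewrite dj.
Qed.

Lemma dhat_ub2 p : e s1 p -> dist e p s1 <= 1 ->
  forall t i, dist e i s1 <= t -> dhat e s0 s1 t i <= t.+1.
Proof.
move=> esp dp; elim=> [|t IH] i h.
  by rewrite /=; apply: leq_trans h _.
case d: (dist e i s1) h => [|b] h.
  move/eqP: d; rewrite dist0 => /eqP ->.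
  apply: leq_trans (dhat_step _ esp) _; rewrite ltnS.
  case: t IH h => [|t] IH _; first by [].
  apply: IH; apply: leq_trans dp _; by [].
have [j eij dj] := dist_down d.
apply: leq_trans (dhat_step _ eij) _; rewrite ltnS; apply: IH.
by rewrite dj -ltnS.
Qed.

End Gen.

Theorem lemma2 (n : nat) (e : rel 'I_n.+1) (D : nat)
  (e_sym : symmetric e) (e_irr : irreflexive e)
  (e_conn : forall i j : 'I_n.+1, connect e i j)
  (D_gt2 : 2 < D) (D_le : D <= n.+1)
  (D_ecc : (forall i, dist e i (node n 0) <= D.-1) /\
           (exists i, dist e i (node n 0) = D.-1))
  (path_edges : forall k, k < D.-1 -> e (node n k) (node n k.+1))
  (path_dist : forall k, k < D -> dist e (node n 0) (node n k) = k) :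
  forall t : nat, 1 <= t ->
    [/\ forall (m : nat) (i : 'I_n.+1), m < t -> inF e (node n 0) m i ->
          dhat e (node n 0) (node n D.-1) t i = m,
        forall (m : nat) (i : 'I_n.+1),
          inF e (node n D.-1) m i -> I2 e (node n 0) (node n D.-1) t i ->
          dhat e (node n 0) (node n D.-1) t i = m
      & forall i : 'I_n.+1, I1 e (node n 0) (node n D.-1) t i ->
          dhat e (node n 0) (node n D.-1) t i = t \/
          dhat e (node n 0) (node n D.-1) t i = t.+1].
Proof.
move=> t t1.
set s0 := node n 0; set s1 := node n D.-1.
have ep : e (node n D.-2) s1.
  have := path_edges D.-2 ltac:(lia).
  by have -> : (D.-2).+1 = D.-1 by lia.
have esp : e s1 (node n D.-2) by rewrite e_sym.
have dp : dist e (node n D.-2) s1 <= 1.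
  have := @dist_edge _ e e_conn _ _ s1 ep.
  by move: (dist0 e_conn s1 s1); rewrite eqxx => /eqP ->.
split.
- move=> m i mt /eqP am.
  apply/eqP; rewrite eqn_leq dhat_ub0 //=.
  have := dhat_lb e_conn s0 s1 t i; rewrite /fb am mt //.
- move=> m i /eqP bm; rewrite /I2 /I1 /I0 => /andP [h1 h2].
  rewrite (negbTE h1) andbT -leqNgt in h2.
  apply/eqP; rewrite eqn_leq -{1}bm dhat_ub1 -?bm //=.
  have := dhat_lb e_conn s0 s1 t i; rewrite /fb (negbTE h1) bm.
  by apply: leq_trans; rewrite leq_maxr.
- move=> i; rewrite /I1 /I0 => /andP [hb ha].
  have := dhat_lb e_conn s0 s1 t i; rewrite /fb (negbTE ha) => lb.
  have := dhat_ub2 e_conn s0 esp dp (ltnW hb).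
  have : t <= maxn t (dist e i s1) by rewrite leq_maxl.
  lia.
Qed.
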